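(* Let $D\ge 3$ and let $G$ be an $n$-vertex graph satisfying properties (C1) and (C3). Let $H=\mathrm{Co}_2(G)$. Then: (i) if $v\in V(H)$, then $\deg_H(v)\ge \deg_G(v)-2$; (ii) if $v\in V(H)\cap S_G(D)$, then $\deg_H(v)\ge\deg_G(v)-1$; (iii) if $\deg_G(v)\ge 3$, then $v\in V(H)$.
   Context: $S_G(D)$ is the set of vertices of $G$ of degree at most $D$. $\mathrm{Co}_2(G)$ is the unique maximal subgraph of $G$ with minimum degree at least $2$. Property (C1): for every set $R\subseteq V(G)$ with $|R|\le 100$ such that $G[R]$ is connected, $|R\cap S_G(D)|\le 2$. Property (C3): $G$ has no connected component with $k$ vertices for any $k\in[3,n/2]$. *)

(* Defs.v *)
From mathcomp Require Import all_boot.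
Set Implicit Arguments. Unset Strict Implicit. Unset Printing Implicit Defensive.

(* A simple graph on a finite vertex type T: symmetric irreflexive relation e. *)

Definition nbr_in (T : finType) (e : rel T) (U : {set T}) (v : T) : {set T} :=
  [set u in U | e v u].

Definition deg (T : finType) (e : rel T) (v : T) : nat := #|[set u | e v u]|.

Definition S_G (T : finType) (e : rel T) (D : nat) : {set T} :=
  [set v | deg e v <= D].

Definition mindeg2 (T : finType) (e : rel T) (U : {set T}) : bool :=
  [forall v in U, 2 <= #|nbr_in e U v|].

(* vertex set of Co_2(G): union of all vertex sets inducing min degree >= 2.
   Co_2(G) is the subgraph of G induced on this set. *)
Definition Co2 (T : finType) (e : rel T) : {set T} :=
  \bigcup_(U : {set T} | mindeg2 e U) U.

Definition deg_Co2 (T : finType) (e : rel T) (v : T) : nat :=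
  #|nbr_in e (Co2 e) v|.

Definition connected_in (T : finType) (e : rel T) (R : {set T}) : Prop :=
  forall x y, x \in R -> y \in R ->
    connect [rel a b | [&& e a b, a \in R & b \in R]] x y.

Definition C1 (T : finType) (e : rel T) (D : nat) : Prop :=
  forall R : {set T}, #|R| <= 100 -> connected_in e R ->
    #|R :&: S_G e D| <= 2.

Definition component (T : finType) (e : rel T) (v : T) : {set T} :=
  [set u | connect e v u].

Definition C3 (T : finType) (e : rel T) : Prop :=
  forall v : T, ~ (3 <= #|component e v| /\ 2 * #|component e v| <= #|T|).

(* Main.v *)
Require Import Defs.
From mathcomp Require Import all_boot.
From mathcomp Require Import zify.

Section Aux.
Variables (T : finType) (e : rel T) (D : nat).
Hypotheses (sym : symmetric e) (irr : irreflexive e) (c1 : C1 e D).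

Lemma star v (A : {set T}) : A \subset [set u | e v u] -> A \subset S_G e D ->
  #|A| <= 99 -> #|A| + (v \in S_G e D) <= 2.
Proof.
move=> AN AS Asz.
have vA : v \notin A.
  by apply/negP => /(subsetP AN); rewrite inE irr.
have Rsz : #|v |: A| <= 100 by rewrite cardsU1 vA /=; lia.
have Rc : connected_in e (v |: A).
  have hv : forall x, x \in v |: A ->
      connect [rel a b | [&& e a b, a \in v |: A & b \in v |: A]] v x.
    move=> x; rewrite in_setU1 => /orP [/eqP -> // | xA].
    apply: connect1 => /=.
    have := subsetP AN x xA; rewrite inE => ->.
    by rewrite setU11 in_setU1 xA orbT.
  move=> x y xR yR; apply: connect_trans (hv y yR).
  have := hv x xR; rewrite sym_connect_sym //.
  by move=> a b /=; rewrite sym; case: (e b a); case: (a \in _); case: (b \in _).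
have := c1 (v |: A) Rsz Rc.
case vS: (v \in S_G e D).
  have -> : (v |: A) :&: S_G e D = v |: A.
    by apply/setIidPl; rewrite subUset sub1set vS AS.
  by rewrite cardsU1 vA /=; lia.
have -> : (v |: A) :&: S_G e D = A.
  apply/setP => x; rewrite !inE; case: eqP => [-> | _] /=.
    by move: vS; rewrite /S_G !inE => ->; apply/esym/negbTE.
  case xA: (x \in A) => //=.
  by have := subsetP AS x xA; rewrite inE.
by lia.
Qed.

Lemma star_big v (A : {set T}) : A \subset [set u | e v u] -> A \subset S_G e D ->
  #|A| + (v \in S_G e D) <= 2.
Proof.
move=> AN AS.
suff H : forall n (A : {set T}), #|A| <= n -> A \subset [set u | e v u] ->
   A \subset S_G e D -> #|A| + (v \in S_G e D) <= 2 by exact: H (leqnn _) AN AS.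
elim=> [|n IH] B Bn BN BS.
  by apply: star => //; lia.
case: (leqP #|B| 99) => Bsz; first exact: star.
have : 0 < #|B| by lia.
rewrite card_gt0 => /set0Pn [x xB].
have := IH (B :\ x).
rewrite (cardsD1 x B) xB in Bn Bsz.
have sub : B :\ x \subset B by apply: subsetDl.
move=> /(_ _ (subset_trans sub BN) (subset_trans sub BS)).
have : #|B :\ x| <= n by lia.
move=> h /(_ h); lia.
Qed.

End Aux.

Theorem lemma5p1 (T : finType) (e : rel T) (D : nat) :
  symmetric e -> irreflexive e -> 3 <= D ->
  C1 e D -> C3 e ->
  [/\ (forall v, v \in Co2 e -> deg e v - 2 <= deg_Co2 e v),
      (forall v, v \in Co2 e -> v \in S_G e D -> deg e v - 1 <= deg_Co2 e v)
    & (forall v, 3 <= deg e v -> v \in Co2 e)].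
Proof.
move=> sym irr D3 c1 _.
pose W := [set x | 3 <= deg e x].
have mW : mindeg2 e W.
  apply/forall_inP => v; rewrite inE => dv.
  pose N := [set u | e v u].
  have hN : #|N| = deg e v by [].
  have := @star_big _ _ _ sym irr c1 v _ (subsetIl N (S_G e D)) (subsetIr N (S_G e D)).
  have := cardsID (S_G e D) N.
  have sub : N :\: S_G e D \subset nbr_in e W v.
    apply/subsetP => u; rewrite !inE => /andP [uS evu].
    by rewrite evu andbT; lia.
  have := subset_leq_card sub.
  have hvS : (v \in S_G e D) = (deg e v <= D) by rewrite inE.
  rewrite hvS; case: (leqP (deg e v) D) => /= ?; lia.
have WC : W \subset Co2 e by apply: (bigcup_sup W (P := mindeg2 e)).
have iii : forall v, 3 <= deg e v -> v \in Co2 e.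
  by move=> v dv; apply: (subsetP WC); rewrite inE.
have key : forall v, #|[set u | e v u] :\: Co2 e| + (v \in S_G e D) <= 2.
  move=> v; apply: (@star_big _ _ _ sym irr c1) => //; first exact: subsetDl.
  apply/subsetP => u; rewrite !inE => /andP [uC _].
  case: (leqP 3 (deg e u)) => du; first by rewrite iii in uC.
  lia.
have dec : forall v, deg e v = deg_Co2 e v + #|[set u | e v u] :\: Co2 e|.
  move=> v; rewrite /deg /deg_Co2 -(cardsID (Co2 e) [set u | e v u]).
  have -> : nbr_in e (Co2 e) v = [set u | e v u] :&: Co2 e.
    by apply/setP => u; rewrite /nbr_in !inE andbC.
  by [].
split => //.
- move=> v _; have := key v; have := dec v; lia.
- move=> v _ vS; have := key v; rewrite vS; have := dec v; lia.
Qed.
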